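(* Let $K\ge 2$ be an integer, $\mathcal{K}=\{1,\dots,K\}$ the set of players (user equipments), and $\mathcal{L}$ a finite set (access points). For each $k\in\mathcal{K}$ let $\mathcal{M}_k\subseteq\mathcal{L}$ be a nonempty set and let $\beta_{k,l}>0$ for $k\in\mathcal{K}$, $l\in\mathcal{L}$. Fix $\alpha\in\mathbb{R}$ and $0<\rho_{\min}\le\rho_{\max}$, and let each player $k$ have strategy set $\mathcal{P}_k=[\rho_{\min},\rho_{\max}]$; write $\boldsymbol{\rho}=(\rho_1,\dots,\rho_K)\in\Upsilon=\mathcal{P}_1\times\cdots\times\mathcal{P}_K$ and $\boldsymbol{\rho}_{(-k)}$ for the strategies of all players other than $k$. Define $c_k=\big(\sum_{l\in\mathcal{M}_k}\beta_{k,l}\big)^{\alpha}$ and the payoff of player $k$ by $$\mu_k(\alpha,\rho_k,\boldsymbol{\rho}_{(-k)})=\frac{\sum_{i\neq k}\rho_i c_i}{\rho_k c_k}+\rho_k c_k\sum_{i\neq k}\frac{1}{\rho_i c_i}.$$ Then the function $$u(\alpha,\boldsymbol{\rho})=\frac12\sum_{k\in\mathcal{K}}\mu_k(\alpha,\boldsymbol{\rho})$$ is an exact potential function for the game $\mathcal{G}(\alpha)=\{\mathcal{K},\{\mathcal{P}_k\}_k,\{\mu_k\}_k\}$, i.e., for every $k\in\mathcal{K}$, every $\boldsymbol{\rho}_{(-k)}$, and every $\rho_k,\rho_k'\in\mathcal{P}_k$, $$u(\alpha,\rho_k',\boldsymbol{\rho}_{(-k)})-u(\alpha,\rho_k,\boldsymbol{\rho}_{(-k)})=\mu_k(\alpha,\rho_k',\boldsymbol{\rho}_{(-k)})-\mu_k(\alpha,\rho_k,\boldsymbol{\rho}_{(-k)}).$$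 In particular $\mathcal{G}(\alpha)$ is an exact potential game.
   Context: A strategic game with player set $\mathcal{K}$, strategy sets $\mathcal{P}_k$ and payoffs $\mu_k:\Upsilon\to\mathbb{R}$ is an exact potential game if there is a function $u:\Upsilon\to\mathbb{R}$ (an exact potential function) such that any unilateral change of strategy by any player $k$ changes $u$ by exactly the same amount as it changes $\mu_k$. Here $\rho_k$ is the uplink data transmit power of user $k$, $\beta_{k,l}$ is the large-scale fading coefficient between user $k$ and access point $l$, and $\mathcal{M}_k$ is the set of access points serving user $k$. *)

(* Defs.v *)
From mathcomp Require Import all_boot all_order all_algebra.
From mathcomp Require Import all_classical all_reals all_analysis.
Set Implicit Arguments. Unset Strict Implicit. Unset Printing Implicit Defensive.
Import Order.TTheory GRing.Theory Num.Theory.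
Local Open Scope ring_scope.

Definition cfac (R : realType) (K : nat) (L : finType)
  (M : 'I_K -> {set L}) (beta : 'I_K -> L -> R) (alpha : R) (k : 'I_K) : R :=
  powR (\sum_(l in M k) beta k l) alpha.

Definition payoff (R : realType) (K : nat) (L : finType)
  (M : 'I_K -> {set L}) (beta : 'I_K -> L -> R) (alpha : R)
  (rho : 'I_K -> R) (k : 'I_K) : R :=
  let c := cfac M beta alpha in
  (\sum_(i < K | i != k) rho i * c i) / (rho k * c k)
  + rho k * c k * \sum_(i < K | i != k) (rho i * c i)^-1.

Definition potential (R : realType) (K : nat) (L : finType)
  (M : 'I_K -> {set L}) (beta : 'I_K -> L -> R) (alpha : R)
  (rho : 'I_K -> R) : R :=
  2^-1 * \sum_(k < K) payoff M beta alpha rho k.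

Definition upd (R : Type) (K : nat) (rho : 'I_K -> R) (k : 'I_K) (x : R)
  : 'I_K -> R := fun i => if i == k then x else rho i.

(* Main.v *)
Require Import Defs.
From mathcomp Require Import all_boot all_order all_algebra.
From mathcomp Require Import all_classical all_reals all_analysis.
From mathcomp Require Import ring lra.
Import Order.TTheory GRing.Theory Num.Theory.
Local Open Scope ring_scope.

Section Aux.
Variables (R : realType) (K : nat).

Definition pay (a : 'I_K -> R) (k : 'I_K) : R :=
  (\sum_(i < K | i != k) a i) / (a k) + a k * \sum_(i < K | i != k) (a i)^-1.

Lemma payE (a : 'I_K -> R) k : (forall i, a i != 0) ->
  pay a k = (\sum_i a i) / a k + a k * (\sum_i (a i)^-1) - 2.
Proof.
move=> Ha; rewrite /pay [\sum_i a i](bigD1 k) // [\sum_i (a i)^-1](bigD1 k) //=.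
have := Ha k => Hk.
field; exact: Hk.
Qed.

Lemma sum_pay (a : 'I_K -> R) : (forall i, a i != 0) ->
  \sum_k pay a k = 2 * ((\sum_i a i) * (\sum_i (a i)^-1) - K%:R).
Proof.
move=> Ha; rewrite (eq_bigr _ (fun k _ => @payE a k Ha)) sumrB big_split /=.
rewrite -mulr_sumr -mulr_suml sumr_const card_ord -mulr_natr; ring.
Qed.
End Aux.
Arguments pay {R K}.
Arguments payE {R K}.
Arguments sum_pay {R K}.

Lemma payoff_pay (R : realType) (K : nat) (L : finType)
  (M : 'I_K -> {set L}) (beta : 'I_K -> L -> R) (alpha : R) rho k :
  payoff M beta alpha rho k = pay (fun i => rho i * cfac M beta alpha i) k.
Proof. by []. Qed.

Theorem corollary1 (R : realType) (K : nat) (L : finType)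
  (M : 'I_K -> {set L}) (beta : 'I_K -> L -> R) (alpha rmin rmax : R) :
  (2 <= K)%N ->
  (forall k, M k != finset.set0) ->
  (forall k l, 0 < beta k l) ->
  0 < rmin -> rmin <= rmax ->
  forall (rho : 'I_K -> R),
  (forall i, rmin <= rho i <= rmax) ->
  forall (k : 'I_K) (x x' : R),
  rmin <= x <= rmax -> rmin <= x' <= rmax ->
  potential M beta alpha (upd rho k x') - potential M beta alpha (upd rho k x)
  = payoff M beta alpha (upd rho k x') k - payoff M beta alpha (upd rho k x) k.
Proof.
move=> _ HM Hb Hmin _ rho Hrho k x x' /andP[Hx _] /andP[Hx' _].
have cpos i : 0 < cfac M beta alpha i.
  apply: powR_gt0.
  have /set0Pn [l Hl] := HM i.
  rewrite (bigD1 l) //=.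
  apply: ltr_wpDr; last exact: Hb.
  by apply: sumr_ge0 => j _; apply/ltW/Hb.
have nz (r : 'I_K -> R) : (forall i, rmin <= r i) -> forall i, r i * cfac M beta alpha i != 0.
  move=> Hr i; apply/lt0r_neq0/mulr_gt0; last exact: cpos.
  exact: lt_le_trans Hmin (Hr i).
have updge y : rmin <= y -> forall i, rmin <= upd rho k y i.
  move=> Hy i; rewrite /upd; case: (i == k) => //.
  by case/andP: (Hrho i).
have nzx := nz _ (updge _ Hx).
have nzx' := nz _ (updge _ Hx').
rewrite /potential !payoff_pay (sum_pay _ nzx) (sum_pay _ nzx') (payE _ k nzx) (payE _ k nzx').
set c := cfac M beta alpha.
have E1 y : \sum_i upd rho k y i * c i = y * c k + \sum_(i < K | i != k) rho i * c i.
  rewrite (bigD1 k) //= /upd eqxx; congr (_ + _).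
  by apply: eq_bigr => i /negbTE ->.
have E2 y : \sum_i (upd rho k y i * c i)^-1 = (y * c k)^-1 + \sum_(i < K | i != k) (rho i * c i)^-1.
  rewrite (bigD1 k) //= /upd eqxx; congr (_ + _).
  by apply: eq_bigr => i /negbTE ->.
rewrite !E1 !E2 /upd eqxx.
have ck := cpos k.
have hx : x != 0 by apply: lt0r_neq0; lra.
have hx' : x' != 0 by apply: lt0r_neq0; lra.
have hc : c k != 0 by apply: lt0r_neq0.
field.
all: try by rewrite ?hx ?hx' ?hc.
Qed.
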